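(* Let $P$ be a valid path with $m=m_T^P$ toll arcs $\tau_1,\dots,\tau_m$ and let $T$ be a nonnegative toll vector. Then $T$ is consistent with $P$ if and only if $$\mathcal{L}_{i,j}+\mathcal{T}_{i,j}\le \mathcal{U}_{i,j}\qquad\text{for all }0\le i<j\le m+1.$$
   Context: Setting: $G=(V,A)$ is a directed multigraph with $A=A_T\cup A_U$ partitioned into toll arcs $A_T$ and toll-free arcs $A_U$, fixed costs $c:A_T\to\mathbf{N}$, $d:A_U\to\mathbf{N}$, and vertices $s,t$ such that there is an $s$–$t$ path using only toll-free arcs. A toll vector $T$ assigns a toll $T(e)\ge 0$ to each toll arc; under $T$ a toll arc $e$ costs $c(e)+T(e)$ and a toll-free arc $e$ costs $d(e)$, and the length of a path is the sum of the costs of its arcs. For an $s$–$t$ path $P$, $\mathcal{N}_T(P)$ denotes the network obtained by deleting all toll arcs not on $P$, with the costs induced by $T$. A path $P$ from $s$ to $t$ is valid if it contains $m_T^P\ge 1$ toll arcs and $P$ is a shortest $s$–$t$ path in $\mathcal{N}_0(P)$ (all tolls zero). Write a valid path as $P=(\upsilon_{0,1},\tau_1,\upsilon_{1,2},\tau_2,\dots,\tau_m,\upsilon_{m,m+1})$, where $m=m_T^P$, $\tau_i$ is the $i$-th toll arc in order of traversal and $\upsilon_{i,i+1}$ is the subpath (of toll-free arcs) between consecutive toll arcs; set $\mathrm{TERM}(\tau_0)=s$ and $\mathrm{INIT}(\tau_{m+1})=t$, where $\mathrm{INIT},\mathrm{TERM}$ denote initial and terminal vertices of an arc. For $0\le i<j\le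 m+1$, $\mathcal{U}_{i,j}$ is the length of a shortest path from $\mathrm{TERM}(\tau_i)$ to $\mathrm{INIT}(\tau_j)$ using only toll-free arcs ($+\infty$ if none). For $0\le k<l\le m+1$, $\mathcal{L}_{k,l}=\sum_{i=k}^{l-1}\mathcal{U}_{i,i+1}+\sum_{i=k+1}^{l-1}c(\tau_i)$ and $\mathcal{T}_{k,l}=\sum_{i=k+1}^{l-1}T(\tau_i)$ (empty sums are $0$). A toll vector $T$ is consistent with a valid path $P$ if $P$ is a shortest $s$–$t$ path in $\mathcal{N}_T(P)$. *)

(* Defs.v *)
From HB Require Import structures.
From mathcomp Require Import all_boot all_order all_algebra.
From mathcomp Require Import boolp classical_sets reals constructive_ereal ereal.
Set Implicit Arguments. Unset Strict Implicit. Unset Printing Implicit Defensive.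
Import Order.TTheory GRing.Theory Num.Theory.
Local Open Scope ring_scope.

Section TollNetwork.
(* Arcs with [istoll e] are the toll arcs A_T,
   the others the toll-free arcs A_U.  Cost c e is used for toll arcs,
   d e for toll-free arcs. *)
Variables (R : realType) (V A : finType) (INIT TERM : A -> V)
  (istoll : pred A) (c d : A -> nat) (s t : V).

Fixpoint is_walk (u v : V) (p : seq A) : bool :=
  match p with
  | [::] => u == v
  | e :: p' => (INIT e == u) && is_walk (TERM e) v p'
  end.

Definition is_path (u v : V) (p : seq A) : bool :=
  is_walk u v p && uniq (u :: map TERM p).

Definition tf_path (u v : V) (p : seq A) : bool :=
  is_path u v p && all (predC istoll) p.

Definition arc_cost (T : A -> R) (e : A) : R :=
  if istoll e then (c e)%:R + T e else (d e)%:R.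

Definition plen (T : A -> R) (p : seq A) : R := \sum_(e <- p) arc_cost T e.

Definition tflen (p : seq A) : nat := \sum_(e <- p) d e.

(* arcs of the network N_T(P): toll-free arcs and toll arcs lying on P *)
Definition in_net (P : seq A) (e : A) : bool := ~~ istoll e || (e \in P).

Definition shortest_in_net (T : A -> R) (P : seq A) : Prop :=
  [/\ is_path s t P, all (in_net P) P &
      forall Q, is_path s t Q -> all (in_net P) Q -> plen T P <= plen T Q].

Definition zero_toll : A -> R := fun _ => 0.

Definition valid (P : seq A) : Prop :=
  (1 <= count istoll P)%N /\ shortest_in_net zero_toll P.

Definition consistent (T : A -> R) (P : seq A) : Prop := shortest_in_net T P.

(* toll arcs of P in order of traversal: tau_1 .. tau_m = (tolls P)`_0 .. `_(m-1) *)
Definition tolls (P : seq A) : seq A := seq.filter istoll P.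

(* TERM(tau_i) for 0 <= i <= m, with TERM(tau_0) = s *)
Definition termv (P : seq A) (i : nat) : V :=
  if i is k.+1 then nth s (map TERM (tolls P)) k else s.

(* INIT(tau_j) for 1 <= j <= m+1, with INIT(tau_(m+1)) = t *)
Definition initv (P : seq A) (j : nat) : V :=
  nth t (map INIT (tolls P)) j.-1.

(* shortest toll-free distance from u to v (+oo if no toll-free path) *)
Definition tf_dist (u v : V) : \bar R :=
  ereal_inf [set ((tflen q)%:R)%:E | q in [set q | tf_path u v q]].

Definition Ucal (P : seq A) (i j : nat) : \bar R := tf_dist (termv P i) (initv P j).

(* c(tau_i), T(tau_i) for 1 <= i <= m *)
Definition ctau (P : seq A) (i : nat) : nat := nth 0%N (map c (tolls P)) i.-1.
Definition Ttau (T : A -> R) (P : seq A) (i : nat) : R := nth 0 (map T (tolls P)) i.-1.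

Definition Lcal (P : seq A) (k l : nat) : \bar R :=
  ((\sum_(k <= i < l) Ucal P i i.+1) + \sum_(k.+1 <= i < l) ((ctau P i)%:R)%:E)%E.

Definition Tcal (T : A -> R) (P : seq A) (k l : nat) : R :=
  \sum_(k.+1 <= i < l) Ttau T P i.

End TollNetwork.

(* Main.v *)
Require Import Defs.
From HB Require Import structures.
From mathcomp Require Import all_boot all_order all_algebra.
From mathcomp Require Import boolp classical_sets reals constructive_ereal ereal.
From mathcomp Require Import zify lra.
Import Order.TTheory GRing.Theory Num.Theory.
Set Implicit Arguments. Unset Strict Implicit. Unset Printing Implicit Defensive.
Local Open Scope ring_scope.

Section Walks.
Variables (V A : finType) (INIT TERM : A -> V).
Local Notation walk := (is_walk INIT TERM).
Local Notation path := (is_path INIT TERM).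
Local Notation wend u p := (last u (map TERM p)).

Lemma walk_end u v p : walk u v p -> v = wend u p.
Proof. by elim: p u => [|e p IH] u /=; [move/eqP | case/andP => _ /IH]. Qed.

Lemma walk_cat u v p1 p2 :
  walk u v (p1 ++ p2) = walk u (wend u p1) p1 && walk (wend u p1) v p2.
Proof. by elim: p1 u => [|e p IH] u /=; [rewrite eqxx | rewrite IH andbA]. Qed.

Lemma wend_cat u p1 p2 : wend u (p1 ++ p2) = wend (wend u p1) p2.
Proof. by rewrite map_cat last_cat. Qed.

Lemma path_cat u v p1 p2 : path u v (p1 ++ p2) ->
  path u (wend u p1) p1 /\ path (wend u p1) v p2.
Proof.
rewrite /is_path walk_cat map_cat -cat_cons cat_uniq.
case/andP => /andP[w1 w2] /and3P[u1 dis u2]; split; rewrite ?w1 ?w2 ?u1 //=.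
rewrite u2 andbT; apply/negP => H; move/hasPn: dis => /(_ _ H).
by rewrite mem_last.
Qed.

Lemma path_drop x0 u v p k : path u v p -> (k < size p)%N ->
  path (TERM (nth x0 p k)) v (drop k.+1 p).
Proof.
move=> hp hk; rewrite -(cat_take_drop k.+1 p) in hp.
have [_ ] := path_cat hp.
by rewrite (take_nth x0 hk) map_rcons last_rcons.
Qed.

Lemma shorten u v W : walk u v W -> exists Q, path u v Q /\ subseq Q W.
Proof.
elim: W u => [|e W IH] u /=.
  move/eqP => <-; exists [::]; by rewrite /is_path /= eqxx.
case/andP => /eqP Hi /IH [Q' [pQ' sQ']].
case: (boolP (u \in map TERM (e :: Q'))) => Hu.
  move: (index u (map TERM (e :: Q'))) (nth_index u Hu) (index_mem u (map TERM (e :: Q'))) => k.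
  rewrite Hu size_map => hk0 kl.
  have hn : TERM (nth e (e :: Q') k) = u.
    by rewrite -(nth_map e u) // hk0.
  exists (drop k.+1 (e :: Q')); split.
    move: hn kl hk0; case: k => [|k] /= hn kl _.
      by rewrite ?drop0 -hn.
    by rewrite -hn; apply: (path_drop e pQ').
  change (subseq (drop k.+1 (e :: Q')) (e :: W)).
  apply: (@subseq_trans _ (e :: Q')); first exact: drop_subseq.
  by rewrite /= eqxx.
exists (e :: Q'); split; last by rewrite eqxx.
move: pQ'; rewrite /is_path /= Hi eqxx /= => /andP[-> ->].
by rewrite andbT.
Qed.

Lemma sum_subseq (R : numDomainType) (f : A -> R) Q W :
  (forall e, 0 <= f e) -> subseq Q W ->
  \sum_(e <- Q) f e <= \sum_(e <- W) f e.
Proof.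
move=> f0; elim: W Q => [|x W IH] Q.
  by rewrite subseq0 => /eqP ->.
case: Q => [|y Q] /=.
  by move=> _; rewrite big_nil; apply: sumr_ge0.
case: eqP => [<-|_] H.
  by rewrite !big_cons lerD2l; exact: IH.
by rewrite [X in _ <= X]big_cons; apply: ler_wpDl => //; exact: IH.
Qed.

End Walks.

Section TollP.
Variables (R : realType) (V A : finType) (INIT TERM : A -> V) (istoll : pred A)
  (c d : A -> nat) (s t : V) (a0 : A) (P : seq A).
Hypothesis hPp : is_path INIT TERM s t P.

Local Notation tl := (tolls istoll P).
Local Notation m := (size tl).
Local Notation wend u p := (last u (map TERM p)).
Definition cnt k := count istoll (take k P).
Definition qp k := index (nth a0 tl k) P.
Definition posT i := if i is i'.+1 then (qp i').+1 else 0%N.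
Definition posI j := if (j <= m)%N then qp j.-1 else size P.

Lemma uniqP : uniq P.
Proof. by case/andP: hPp => _ /= /andP[_ /map_uniq]. Qed.

Lemma uniq_tl : uniq tl.
Proof. exact: (filter_uniq _ uniqP). Qed.

Lemma qp_facts k : (k < m)%N ->
  [/\ (qp k < size P)%N, nth a0 P (qp k) = nth a0 tl k & istoll (nth a0 tl k)].
Proof.
move=> hk; have : nth a0 tl k \in tl by exact: mem_nth.
rewrite mem_filter => /andP[ht hP].
by split => //; rewrite ?index_mem ?nth_index.
Qed.

Lemma cnt_seg a b : (a <= b)%N ->
  cnt b = (cnt a + count istoll (drop a (take b P)))%N.
Proof. by move=> hab; rewrite /cnt -{1}(cat_take_drop a (take b P)) take_takel // count_cat. Qed.

Lemma cnt_mono a b : (a <= b)%N -> (cnt a <= cnt b)%N.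
Proof. by move=> hab; rewrite (cnt_seg hab) leq_addr. Qed.

Lemma cnt_size : cnt (size P) = m.
Proof. by rewrite /cnt take_size /tolls size_filter. Qed.

Lemma cnt_qp k : (k < m)%N -> cnt (qp k) = k /\ cnt (qp k).+1 = k.+1.
Proof.
move=> hk; have [hq he ht] := qp_facts hk.
have dec : tl = seq.filter istoll (take (qp k) P) ++ nth a0 tl k :: seq.filter istoll (drop (qp k).+1 P).
  by rewrite {1}/tolls -{1}(cat_take_drop (qp k) P) filter_cat (drop_nth a0 hq) he /= ht.
have hlt : (cnt (qp k) < m)%N.
  by rewrite [in X in (_ < X)%N]dec size_cat /= /cnt size_filter addnS ltnS leq_addr.
have hn : nth a0 tl (cnt (qp k)) = nth a0 tl k.
  by rewrite [in X in nth _ X _ = _]dec /cnt -size_filter nth_cat ltnn subnn.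
move/eqP: hn; rewrite nth_uniq ?uniq_tl // => /eqP hc; split => //.
move: hc; rewrite /cnt (take_nth a0 hq) -cats1 count_cat /= he ht => ->.
by rewrite addn1.
Qed.

Lemma cnt_posT i : (i <= m)%N -> cnt (posT i) = i.
Proof. by case: i => [|i] hi /=; [rewrite /cnt take0 | case: (cnt_qp hi)]. Qed.

Lemma cnt_posI j : (0 < j <= m.+1)%N -> cnt (posI j) = j.-1.
Proof.
case/andP=> hj0 hj; rewrite /posI; case: ifP => hjm.
  by case: (cnt_qp (k := j.-1) _) => //; rewrite prednK.
have -> : j = m.+1 by apply/eqP; rewrite eqn_leq hj ltnNge hjm.
exact: cnt_size.
Qed.

Lemma posI_size j : (posI j <= size P)%N.
Proof. by rewrite /posI; case: ifP => // _; exact: index_size. Qed.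

Lemma posT_size i : (i <= m)%N -> (posT i <= size P)%N.
Proof. by case: i => [|i] hi //=; case: (qp_facts hi). Qed.

Lemma posT_posI i j : (i < j <= m.+1)%N -> (posT i <= posI j)%N.
Proof.
case/andP=> hij hj; rewrite /posI; case: ifP => hjm; last first.
  by apply: posT_size; rewrite -ltnS (leq_trans hij hj).
rewrite leqNgt; apply/negP => H.
have j0 : (0 < j)%N by apply: leq_ltn_trans hij.
have hk : (j.-1 < m)%N by rewrite prednK.
have := cnt_mono H; rewrite cnt_posT; last by rewrite ltnW // (leq_trans hij hjm).
by case: (cnt_qp hk) => _ ->; rewrite prednK // leqNgt hij.
Qed.

Lemma posT_mono b a : (b <= a <= m)%N -> (posT b <= posT a)%N.
Proof.
case/andP=> hba ham; case: b hba => [|b] hba //.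
rewrite leqNgt; apply/negP => H.
have hb : (b < m)%N by rewrite (leq_trans hba ham).
have := cnt_mono (H : (posT a <= qp b)%N); rewrite cnt_posT //.
by case: (cnt_qp hb) => -> _; rewrite leqNgt hba.
Qed.

Lemma seg_tf p : (p <= m)%N -> all (predC istoll) (drop (posT p) (take (posI p.+1) P)).
Proof.
move=> hp; have hle : (posT p <= posI p.+1)%N by apply: posT_posI; rewrite ltnSn ltnS.
have := cnt_seg hle; rewrite cnt_posT // cnt_posI /=; last by rewrite ltnS.
move=> h; rewrite all_predC has_count.
have -> : count istoll (drop (posT p) (take (posI p.+1) P)) = 0%N by lia.
by [].
Qed.

Lemma wend_posT i : (i <= m)%N -> wend s (take (posT i) P) = termv TERM istoll s P i.
Proof.
case: i => [|i] hi /=; first by rewrite take0.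
have [hq he _] := qp_facts hi.
by rewrite (take_nth a0 hq) map_rcons last_rcons he (nth_map a0).
Qed.

Lemma initv_last : initv INIT istoll t P m.+1 = t.
Proof. by rewrite /initv /= nth_default // size_map. Qed.

Lemma wend_posI j : (0 < j <= m.+1)%N -> wend s (take (posI j) P) = initv INIT istoll t P j.
Proof.
case/andP=> hj0 hj; rewrite /posI; case: ifP => hjm; last first.
  have -> : j = m.+1 by apply/eqP; rewrite eqn_leq hj ltnNge hjm.
  rewrite initv_last take_size; case/andP: hPp => w _.
  by rewrite -(walk_end w).
have hk : (j.-1 < m)%N by rewrite prednK.
have [hq he _] := qp_facts hk.
case/andP: hPp => w _; move: w.
rewrite -{1}(cat_take_drop (qp j.-1) P) walk_cat (drop_nth a0 hq) /= => /and3P[_ /eqP <- _].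
by rewrite /initv (nth_map a0) // he.
Qed.

Lemma path_seg a b : (a <= b)%N -> (b <= size P)%N ->
  is_path INIT TERM (wend s (take a P)) (wend s (take b P)) (drop a (take b P)).
Proof.
move=> hab hb.
have E : take a P ++ drop a (take b P) = take b P.
  by rewrite -{1}(take_takel P hab) cat_take_drop.
have h0 : is_path INIT TERM s t ((take a P ++ drop a (take b P)) ++ drop b P).
  by rewrite E cat_take_drop.
move/path_cat: h0 => [/path_cat [_ h] _].
by rewrite E in h.
Qed.

Implicit Types (T : A -> R).
Local Notation plen T := (@Defs.plen R A istoll c d T).
Local Notation seg i j := (drop (posT i) (take (posI j) P)).

Lemma plen_cat T p1 p2 : plen T (p1 ++ p2) = plen T p1 + plen T p2.
Proof. by rewrite /Defs.plen big_cat. Qed.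

Lemma plen_take T a b : (a <= b)%N ->
  plen T (take b P) = plen T (take a P) + plen T (drop a (take b P)).
Proof. by move=> hab; rewrite -{1}(cat_take_drop a (take b P)) take_takel // plen_cat. Qed.

Lemma arc_cost_ge0 T : (forall e, istoll e -> 0 <= T e) ->
  forall e, 0 <= arc_cost istoll c d T e.
Proof.
by move=> hT e; rewrite /arc_cost; case: ifP => he //; rewrite addr_ge0 // hT.
Qed.

Lemma plen_ge0 T p : (forall e, istoll e -> 0 <= T e) -> 0 <= plen T p.
Proof. by move=> hT; apply: sumr_ge0 => e _; apply: arc_cost_ge0. Qed.

Lemma plen_tf T r : all (predC istoll) r -> plen T r = (tflen d r)%:R.
Proof.
rewrite /Defs.plen /tflen; elim: r => [|e r IH] /=; first by rewrite !big_nil.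
case/andP => he hr; rewrite !big_cons IH // natrD /arc_cost.
by rewrite (negbTE he).
Qed.

Lemma alpha_beta T p : (0 < p <= m)%N ->
  plen T (take (posT p) P) = plen T (take (posI p) P) + arc_cost istoll c d T (nth a0 tl p.-1).
Proof.
case: p => [|p] //= hp; rewrite /posI hp /=.
have [hq he _] := qp_facts hp.
by rewrite (take_nth a0 hq) -cats1 plen_cat /Defs.plen big_seq1 he.
Qed.

Lemma arc_cost_tau T p : (0 < p <= m)%N ->
  arc_cost istoll c d T (nth a0 tl p.-1) = (ctau istoll c P p)%:R + Ttau istoll T P p.
Proof.
case: p => [|p] //= hp; have [_ _ ht] := qp_facts hp.
by rewrite /arc_cost ht /ctau /Ttau /= (nth_map a0) // (nth_map a0).
Qed.

Lemma splice T : (forall e, istoll e -> 0 <= T e) ->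
  shortest_in_net INIT TERM istoll c d s t T P ->
  forall i j q, (i < j <= m.+1)%N ->
  tf_path INIT TERM istoll (termv TERM istoll s P i) (initv INIT istoll t P j) q ->
  plen T (seg i j) <= (tflen d q)%:R.
Proof.
move=> hT [hp _ hmin] i j q hij /andP[/andP[wq _] tfq].
have him : (i <= m)%N by case/andP: hij => h1 h2; rewrite -ltnS (leq_trans h1 h2).
have hj0 : (0 < j <= m.+1)%N by case/andP: hij => h1 ->; rewrite andbT (leq_ltn_trans _ h1).
have hab := posT_posI hij.
set a := posT i in hab *; set b := posI j in hab *.
have wW : is_walk INIT TERM s t (take a P ++ q ++ drop b P).
  case/andP: hp => w _.
  rewrite walk_cat wend_posT // walk_cat -(walk_end wq) wq /=.
  move: (w); rewrite -{1}(cat_take_drop a P) walk_cat wend_posT // => /andP[-> _] /=.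
  by move: w; rewrite -{1}(cat_take_drop b P) walk_cat wend_posI // => /andP[_ ->].
have [Q [pQ sQ]] := shorten wW.
have nQ : all (in_net istoll P) Q.
  apply/allP => e /(mem_subseq sQ); rewrite !mem_cat /in_net => /or3P[h|h|h].
  - by rewrite (mem_take h) orbT.
  - by move/allP: tfq => /(_ e h) /= ->.
  - by rewrite (mem_drop h) orbT.
have h1 := hmin Q pQ nQ.
have h2 : plen T Q <= plen T (take a P ++ q ++ drop b P).
  by apply: sum_subseq => //; apply: arc_cost_ge0.
move: h2; rewrite !plen_cat (plen_tf T tfq).
have h3 : plen T P = plen T (take b P) + plen T (drop b P).
  by rewrite -plen_cat cat_take_drop.
rewrite (plen_take T hab) in h3.
move=> h2; lra.
Qed.

Lemma Useg : valid R INIT TERM istoll c d s t P -> forall p, (p <= m)%N ->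
  Ucal R INIT TERM istoll d s t P p p.+1 = ((tflen d (seg p p.+1))%:R)%:E.
Proof.
move=> hv p hp.
have hpp : (p < p.+1 <= m.+1)%N by rewrite ltnSn ltnS.
have hab := posT_posI hpp.
have tfs : tf_path INIT TERM istoll (termv TERM istoll s P p) (initv INIT istoll t P p.+1) (seg p p.+1).
  rewrite /tf_path seg_tf // andbT -wend_posT // -wend_posI //.
  by apply: path_seg => //; apply: posI_size.
apply/eqP; rewrite eq_le; apply/andP; split.
  by apply: ereal_inf_lbound; exists (seg p p.+1).
apply: le_ereal_inf_tmp => y [q hq <-]; rewrite lee_fin.
rewrite -(plen_tf (@zero_toll R A) (seg_tf hp)).
by apply: (splice _ hv.2) => //; move=> e _; rewrite /zero_toll.
Qed.

Lemma LT_eq T : valid R INIT TERM istoll c d s t P -> forall i j, (i < j <= m.+1)%N ->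
  (Lcal R INIT TERM istoll c d s t P i j + (Tcal istoll T P i j)%:E)%E =
  (plen T (take (posI j) P) - plen T (take (posT i) P))%:E.
Proof.
move=> hv i j /andP[hij hjm]; rewrite /Lcal /Tcal.
rewrite (@eq_big_nat _ _ _ i j _ (fun p => (plen T (take (posI p.+1) P) - plen T (take (posT p) P))%:E)); last first.
  move=> p /andP[hip hpj].
  have hpm : (p <= m)%N by rewrite -ltnS (leq_trans hpj hjm).
  rewrite Useg // (plen_take T (posT_posI (i := p) (j := p.+1) _)); last by rewrite ltnSn ltnS.
  by rewrite (plen_tf T (seg_tf hpm)) addrC addKr.
rewrite !sumEFin -!EFinD; congr EFin.
elim: j hij hjm => [//|j IH] hij hjm.
case: (ltngtP i j) => h.
- rewrite big_nat_recr ?(ltnW h) //= big_nat_recr //= big_nat_recr //=.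
  have hjm' : (j <= m.+1)%N by rewrite ltnW.
  have := IH h hjm'.
  have hj : (0 < j <= m)%N by rewrite (leq_ltn_trans _ h) //= -ltnS.
  have := alpha_beta T hj; rewrite arc_cost_tau //.
  move=> e1 e2; lra.
- by move: hij; rewrite ltnS leqNgt h.
- subst j; rewrite big_nat1 !big_geq //.
  by rewrite addr0 addr0.
Qed.

Lemma alpha_mono T b a : (forall e, istoll e -> 0 <= T e) -> (b <= a <= m)%N ->
  plen T (take (posT b) P) <= plen T (take (posT a) P).
Proof.
move=> hT hba; rewrite (plen_take T (posT_mono hba)) lerDl.
exact: plen_ge0.
Qed.

Lemma plen_nil T : plen T [::] = 0.
Proof. by rewrite /Defs.plen big_nil. Qed.

Lemma plen_cons T e q : plen T (e :: q) = arc_cost istoll c d T e + plen T q.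
Proof. by rewrite /Defs.plen big_cons. Qed.

Lemma ind_main T : (forall e, istoll e -> 0 <= T e) ->
  valid R INIT TERM istoll c d s t P ->
  (forall i j : nat, (i < j <= m.+1)%N ->
     (Lcal R INIT TERM istoll c d s t P i j + (Tcal istoll T P i j)%:E
        <= Ucal R INIT TERM istoll d s t P i j)%E) ->
  forall q a r, (a <= m)%N ->
  is_path INIT TERM (termv TERM istoll s P a) t (r ++ q) ->
  all (predC istoll) r -> all (in_net istoll P) q ->
  plen T P <= plen T (take (posT a) P) + plen T r + plen T q.
Proof.
move=> hT hv H.
have Hd : forall a b r, (a < b <= m.+1)%N ->
    tf_path INIT TERM istoll (termv TERM istoll s P a) (initv INIT istoll t P b) r ->
    plen T (take (posI b) P) <= plen T (take (posT a) P) + plen T r.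
  move=> a b r hab hr.
  have := le_trans (H a b hab) (ereal_inf_lbound (ex_intro2 _ _ r hr erefl)).
  rewrite (LT_eq T hv hab) lee_fin.
  case/andP: hr => _ tr; rewrite (plen_tf T tr).
  move=> h; lra.
elim=> [|e q IH] a r ha pr tr nq.
  rewrite cats0 in pr.
  have hb : (a < m.+1 <= m.+1)%N by rewrite ltnS ha leqnn.
  have := Hd a m.+1 r hb; rewrite initv_last /tf_path pr tr => /(_ isT).
  rewrite /posI ltnn take_size plen_nil addr0; exact.
move: nq => /= /andP[ne nq].
case: (boolP (istoll e)) => te; last first.
  have := IH a (rcons r e) ha; rewrite cat_rcons all_rcons [predC istoll e]/= te tr => /(_ pr isT nq).
  rewrite -cats1 !plen_cat plen_cons !plen_cons plen_nil.
  move=> h; lra.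
have eP : e \in P by move: ne; rewrite /in_net te.
have etl : e \in tl by rewrite mem_filter te eP.
set b := index e tl.
have hb : (b < m)%N by rewrite index_mem.
have he : nth a0 tl b = e by rewrite nth_index.
have hti : initv INIT istoll t P b.+1 = INIT e by rewrite /initv /= (nth_map a0) // he.
have htt : termv TERM istoll s P b.+1 = TERM e by rewrite /termv (nth_map a0) // he.
have [p1 p2] := path_cat pr.
have hIe : INIT e = last (termv TERM istoll s P a) (map TERM r).
  by case/andP: p2 => /= /andP[/eqP -> _].
have [_ p3] := path_cat (p2 : is_path INIT TERM _ t ([:: e] ++ q)).
have := IH b.+1 [::] hb; rewrite htt /= => /(_ p3 isT nq).
rewrite plen_nil addr0.
have hb1 : (0 < b.+1 <= m)%N by [].
rewrite (alpha_beta T hb1) /= he.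
have hac := arc_cost_ge0 hT e.
have hr0 := plen_ge0 r hT.
rewrite plen_cons.
case: (ltnP a b.+1) => hab.
  have hab' : (a < b.+1 <= m.+1)%N by rewrite hab /= ltnS ltnW.
  have := Hd a b.+1 r hab'; rewrite hti hIe /tf_path p1 tr => /(_ isT).
  move=> h1 h2; lra.
have := alpha_mono hT (b := b.+1) (a := a); rewrite hab ha => /(_ isT).
have := alpha_beta T hb1; rewrite /= he => ->.
move=> h1 h2; lra.
Qed.

End TollP.

Theorem theorem4 (R : realType) (V A : finType) (INIT TERM : A -> V)
  (istoll : pred A) (c d : A -> nat) (s t : V)
  (h_tf : exists Q, tf_path INIT TERM istoll s t Q)
  (P : seq A) (T : A -> R)
  (hP : valid R INIT TERM istoll c d s t P)
  (hT : forall e, istoll e -> 0 <= T e) :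
  consistent INIT TERM istoll c d s t T P <->
  (forall i j : nat, (i < j <= (size (tolls istoll P)).+1)%N ->
     (Lcal R INIT TERM istoll c d s t P i j + (Tcal istoll T P i j)%:E
        <= Ucal R INIT TERM istoll d s t P i j)%E).
Proof.
have [a0 _] : exists a0 : A, True.
  by case: P hP => [[]|a0 _ _]; [by [] | by exists a0].
have [_ [hp _ _]] := hP.
split.
  move=> hc i j hij; rewrite (LT_eq a0 hp T hP hij).
  apply: le_ereal_inf_tmp => y [q hq <-]; rewrite lee_fin.
  rewrite (plen_take istoll c d P T (posT_posI a0 hp hij)) addrC addKr.
  exact: (splice a0 hp hT hc hij hq).
move=> H; split => //.
  by apply/allP => e he; rewrite /in_net he orbT.
move=> Q pQ nQ.
have := ind_main a0 hp hT hP H (a := 0) (r := [::]) (leq0n _) pQ isT nQ.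
by rewrite /= take0 !plen_nil !add0r.
Qed.
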